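(* Let $\alpha,\beta,\gamma,x$ be non-negative integers with $(\alpha,\beta,\gamma,x)\neq(0,0,0,0)$. Then for every integer $n\ge0$, $$T_{n+1}^{1,x}(\alpha,\beta,\gamma)=\gamma\,T_n^{1,x}(\alpha,\beta,\gamma-\alpha)+x\beta\sum_{k=0}^{n}\binom{n}{k}T_{n-k}^{1,x}(\alpha,\beta,\gamma)\,T_k^{1,x}(\alpha,\beta,\beta-\alpha).$$
   Context: For complex numbers $c,\alpha$ and an integer $n\ge 0$ let $(c|\alpha)_n=\prod_{i=0}^{n-1}(c-i\alpha)$, with $(c|\alpha)_0=1$. Let $E_{\alpha,c}(t)=\sum_{n\ge 0}(c|\alpha)_n\,t^n/n!$, viewed as a formal power series in $t$. It equals $(1+\alpha t)^{c/\alpha}$ if $\alpha\neq0$ and $e^{ct}$ if $\alpha=0$. For complex $\alpha,\beta,\gamma,x$ and a non-negative integer $\lambda$, the numbers $T_n^{\lambda,x}(\alpha,\beta,\gamma)$, $n\ge0$, are defined by the formal power series identity $$\sum_{n\ge0}T_n^{\lambda,x}(\alpha,\beta,\gamma)\frac{t^n}{n!}=E_{\alpha,\gamma}(t)\,\bigl(1-x(E_{\alpha,\beta}(t)-1)\bigr)^{-\lambda}.$$ The third argument may be any complex number, e.g. $\gamma-\alpha$ or $\beta-\alpha$. *)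

(* Defs.v *)
From HB Require Import structures.
From mathcomp Require Import all_boot all_order all_algebra all_field.
Set Implicit Arguments. Unset Strict Implicit. Unset Printing Implicit Defensive.
Import Order.TTheory GRing.Theory Num.Theory.
Local Open Scope ring_scope.

Definition fps := nat -> algC.

Definition fps_one : fps := fun n => (n == 0%N)%:R.

Definition fps_mul (f g : fps) : fps :=
  fun n => \sum_(i < n.+1) f i * g (n - i)%N.

Definition fps_pow (f : fps) (m : nat) : fps := iter m (fps_mul f) fps_one.

(* For h with h 0 = 0, (1 - h)^{-1} = sum_{m>=0} h^m; the coefficient of t^n
   only involves m <= n. *)
Definition fps_geom (h : fps) : fps :=
  fun n => \sum_(m < n.+1) fps_pow h m n.

Definition gfall (c a : algC) (n : nat) : algC := \prod_(i < n) (c - i%:R * a).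

Definition Eser (a c : algC) : fps := fun n => gfall c a n / n`!%:R.

(* Generating function E_{a,g}(t) (1 - x (E_{a,b}(t) - 1))^{-lam} *)
Definition Tgf (lam : nat) (x a b g : algC) : fps :=
  fps_mul (Eser a g)
    (fps_pow (fps_geom (fun n => x * (Eser a b n - fps_one n))) lam).

Definition T (lam : nat) (x : algC) (n : nat) (a b g : algC) : algC :=
  n`!%:R * Tgf lam x a b g n.

(* Main.v *)
Require Import Defs.
From HB Require Import structures.
From mathcomp Require Import all_boot all_order all_algebra all_field.
From mathcomp Require Import ring zify.
From Stdlib Require Import FunctionalExtensionality.
Import Order.TTheory GRing.Theory Num.Theory.
Local Open Scope ring_scope.

Lemma sum_collapse M (c : nat) (F : nat -> algC) :
  \sum_(j < M) (j == c :> nat)%:R * F j = if (c < M)%N then F c else 0.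
Proof.
case: ltnP => h.
  rewrite (bigD1 (Ordinal h)) //= eqxx mul1r big1 ?addr0 // => j hj.
  rewrite (_ : (j == c :> nat) = false) ?mul0r //.
  apply/eqP => e; move/eqP: hj; apply; exact: val_inj.
by apply: big1 => j _; rewrite ltn_eqF ?mul0r // (leq_trans (ltn_ord j) h).
Qed.

Lemma ind_split (i j n : nat) :
  ((i + j == n)%N%:R : algC) = (leq i n)%:R * (j == (n - i)%N)%:R.
Proof.
case: (leqP i n) => h.
  rewrite mul1r; congr (_%:R); apply/eqP/eqP; lia.
by rewrite mul0r (_ : (i + j == n) = false) //; apply/eqP; lia.
Qed.

Lemma mulE_wide (f g : fps) n M : (n < M)%N ->
  fps_mul f g n = \sum_(i < M) \sum_(j < M) (i + j == n)%N%:R * (f i * g j).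
Proof.
move=> hM.
have -> : \sum_(i < M) \sum_(j < M) (i + j == n)%N%:R * (f i * g j) =
          \sum_(i < M) (leq i n)%:R * (f i * g (n - i)%N).
  apply: eq_bigr => i _.
  under eq_bigr => j _ do rewrite ind_split -mulrA.
  rewrite -mulr_sumr (sum_collapse M (n - i) (fun j => f i * g j)).
  case: (leqP (nat_of_ord i) n) => h; last by rewrite !mul0r.
  by rewrite ifT //; apply: leq_ltn_trans (leq_subr _ _) hM.
rewrite /fps_mul (big_ord_widen M (fun i => f i * g (n - i)%N) hM) big_mkcond.
by apply: eq_bigr => i _; rewrite ltnS; case: leqP; rewrite ?mul1r ?mul0r.
Qed.

Lemma mulC (f g : fps) : fps_mul f g = fps_mul g f.
Proof.
apply: functional_extensionality => n.
rewrite !(mulE_wide _ _ _ _ (ltnSn n)) exchange_big /=.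
by apply: eq_bigr => i _; apply: eq_bigr => j _; rewrite addnC [f j * _]mulrC.
Qed.

Lemma collapse2 N (c k n : nat) (Y : algC) : (n < N)%N ->
  \sum_(p < N) ((p + k == n)%N%:R * ((c == p)%N%:R * Y)) = (c + k == n)%N%:R * Y.
Proof.
move=> hN.
under eq_bigr => p _ do rewrite mulrCA eq_sym.
rewrite (sum_collapse N c (fun p => (p + k == n)%N%:R * Y)).
case: ltnP => // h; rewrite (_ : (c + k == n)%N = false) ?mul0r //.
apply/eqP; lia.
Qed.

Lemma rearr1 (a b x y z : algC) : a * ((b * (x*y)) * z) = a * (b * (x*y*z)).
Proof. by rewrite !mulrA. Qed.
Lemma rearr2 (a b x y z : algC) : a * (x * (b * (y*z))) = a * (b * (x*y*z)).
Proof. by rewrite !mulrA [a * x * b]mulrAC. Qed.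

Lemma mulA (f g h : fps) : fps_mul (fps_mul f g) h = fps_mul f (fps_mul g h).
Proof.
apply: functional_extensionality => n.
pose N := n.+1.
have hN : (n < N)%N by [].
rewrite !(mulE_wide _ _ _ _ hN).
transitivity (\sum_(k < N) \sum_(i < N) \sum_(j < N)
   (i + j + k == n)%N%:R * (f i * g j * h k)).
  under eq_bigr => p _.
    under eq_bigr => k _.
      rewrite (mulE_wide _ _ _ _ (ltn_ord p)) mulr_suml mulr_sumr.
      under eq_bigr => i _.
        rewrite mulr_suml mulr_sumr.
        under eq_bigr => j _ do rewrite rearr1.
        over.
      over.
    over.
  rewrite exchange_big /=; apply: eq_bigr => k _.
  rewrite exchange_big /=; apply: eq_bigr => i _.
  rewrite exchange_big /=; apply: eq_bigr => j _.
  by rewrite collapse2.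
transitivity (\sum_(i < N) \sum_(j < N) \sum_(k < N)
   (i + (j + k) == n)%N%:R * (f i * g j * h k)).
  rewrite exchange_big /=; apply: eq_bigr => i _.
  rewrite exchange_big /=; apply: eq_bigr => j _.
  by apply: eq_bigr => k _; rewrite addnA.
apply: eq_bigr => i _.
under [RHS]eq_bigr => q _.
  rewrite (mulE_wide _ _ _ _ (ltn_ord q)) !mulr_sumr.
  under eq_bigr => j _.
    rewrite !mulr_sumr.
    under eq_bigr => k _ do rewrite rearr2.
    over.
  over.
rewrite [RHS]exchange_big /=; apply: eq_bigr => j _.
rewrite [RHS]exchange_big /=; apply: eq_bigr => k _.
under [RHS]eq_bigr => q _ do rewrite (addnC i q).
by rewrite collapse2 // addnC.
Qed.

Definition fD (f : fps) : fps := fun n => n.+1%:R * f n.+1.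

Lemma mul_one (f : fps) : fps_mul f fps_one = f.
Proof.
apply: functional_extensionality => n.
rewrite /fps_mul big_ord_recr /= subnn /fps_one eqxx mulr1 big1 ?add0r // => i _.
by rewrite (_ : (n - i == 0)%N = false) ?mulr0 //; apply/negbTE; rewrite subn_eq0 -ltnNge.
Qed.

Lemma one_mul (f : fps) : fps_mul fps_one f = f.
Proof. by rewrite mulC mul_one. Qed.

Lemma mulDr (f g h : fps) n :
  fps_mul f (fun m => g m + h m) n = fps_mul f g n + fps_mul f h n.
Proof. by rewrite /fps_mul -big_split; apply: eq_bigr => i _; rewrite mulrDr. Qed.

Lemma mulBl (f g h : fps) n :
  fps_mul (fun m => f m - g m) h n = fps_mul f h n - fps_mul g h n.
Proof. by rewrite /fps_mul -sumrB; apply: eq_bigr => i _; rewrite mulrBl. Qed.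

Lemma mulZl (c : algC) (f g : fps) n :
  fps_mul (fun m => c * f m) g n = c * fps_mul f g n.
Proof. by rewrite /fps_mul mulr_sumr; apply: eq_bigr => i _; rewrite mulrA. Qed.

Lemma mulZr (c : algC) (f g : fps) n :
  fps_mul f (fun m => c * g m) n = c * fps_mul f g n.
Proof. by rewrite mulC mulZl mulC. Qed.

Lemma D_mul (f g : fps) n :
  fD (fps_mul f g) n = fps_mul (fD f) g n + fps_mul f (fD g) n.
Proof.
rewrite /fD /fps_mul mulr_sumr.
transitivity (\sum_(i < n.+2) ((i%:R * f i) * g (n.+1 - i)%N
                 + f i * ((n.+1 - i)%N%:R * g (n.+1 - i)%N))).
  apply: eq_bigr => i _.
  have hi : (i <= n.+1)%N by rewrite -ltnS.
  by rewrite -{1}(subnKC hi) natrD; ring.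
rewrite big_split /=; congr (_ + _).
  rewrite big_ord_recl /= mul0r mul0r add0r.
  by apply: eq_bigr => i _; rewrite /bump /= add1n subSS.
rewrite big_ord_recr /= subnn mul0r mulr0 addr0.
apply: eq_bigr => i _; rewrite /= subSn //.
by rewrite -ltnS.
Qed.

Lemma D_E (a c : algC) n : fD (Eser a c) n = c * Eser a (c - a) n.
Proof.
rewrite /fD /Eser /gfall big_ord_recl /= factS natrM.
have -> : \prod_(i < n) (c - (bump 0 i)%:R * a) = \prod_(i < n) (c - a - i%:R * a).
  by apply: eq_bigr => i _; rewrite /bump /= add1n -addn1 natrD; ring.
have h1 : (n.+1%:R : algC) != 0 by rewrite pnatr_eq0.
have h2 : (n`!%:R : algC) != 0 by rewrite pnatr_eq0 -lt0n fact_gt0.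
by field; rewrite h2 -(natrD _ 1 n) add1n h1.
Qed.

Section Geom.
Variable h : fps.
Hypothesis h0 : h 0%N = 0.

Lemma pw_vanish m n : (n < m)%N -> fps_pow h m n = 0.
Proof.
elim: m n => [//|m IH] n hn /=.
rewrite /fps_mul; apply: big1 => i _.
case: (posnP (nat_of_ord i)) => hi.
  by rewrite hi h0 mul0r.
by rewrite IH ?mulr0 //; have := ltn_ord i; lia.
Qed.

Lemma geom_wide k N : (k < N)%N -> \sum_(m < N) fps_pow h m k = fps_geom h k.
Proof.
move=> hk; rewrite /fps_geom -!(big_mkord xpredT (fun m => fps_pow h m k)).
rewrite (big_cat_nat _ (n := k.+1)) //= [X in _ + X]big1_seq ?addr0 // => m.
by rewrite mem_index_iota => /andP[_ /andP[hm _]]; rewrite pw_vanish.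
Qed.

Lemma geomA n : fps_geom h n = fps_one n + fps_mul h (fps_geom h) n.
Proof.
transitivity (\sum_(m < n.+2) fps_pow h m n); first by rewrite geom_wide.
rewrite big_ord_recl /=; congr (_ + _).
rewrite /fps_mul.
under [RHS]eq_bigr => i _ do rewrite -(@geom_wide (n - i) n.+1 (leq_subr i n)) mulr_sumr.
rewrite [RHS]exchange_big /=.
by apply: eq_bigr => m _; rewrite /bump /= ?add0n.
Qed.
End Geom.

Lemma cancel_lem (X Y D : algC) : X = Y + (X - D) -> D = Y.
Proof.
move=> e; transitivity (Y - (Y + (X - D) - X)); first ring.
by rewrite -e subrr subr0.
Qed.

Lemma geomD (h : fps) (h0 : h 0%N = 0) n :
  fD (fps_geom h) n = fps_mul (fps_geom h) (fps_mul (fD h) (fps_geom h)) n.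
Proof.
set G := fps_geom h.
have B : fD G = (fun m => fps_mul (fD h) G m + fps_mul h (fD G) m).
  apply: functional_extensionality => m.
  rewrite {1}/fD /G geomA // /fps_one /= mulrDr mulr0 add0r.
  transitivity (fD (fps_mul h (fps_geom h)) m); first by []. exact: D_mul.
have HG : fps_mul h G = (fun m => G m - fps_one m).
  apply: functional_extensionality => m.
  by rewrite /G (geomA _ h0 m) addrAC subrr add0r.
apply: cancel_lem (fps_mul G (fD G) n) _ _ _.
rewrite {1}B mulDr; congr (_ + _).
by rewrite -mulA [fps_mul G h]mulC HG mulBl one_mul.
Qed.

Lemma mulZlF (c : algC) (f g : fps) :
  fps_mul (fun m => c * f m) g = (fun m => c * fps_mul f g m).
Proof. by apply: functional_extensionality => m; rewrite mulZl. Qed.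
Lemma mulZrF (c : algC) (f g : fps) :
  fps_mul f (fun m => c * g m) = (fun m => c * fps_mul f g m).
Proof. by apply: functional_extensionality => m; rewrite mulZr. Qed.

Lemma main (x a b g : algC) n :
  T 1 x n.+1 a b g = g * T 1 x n a b (g - a)
    + x * b * \sum_(k < n.+1) 'C(n, k)%:R * T 1 x (n - k)%N a b g * T 1 x k a b (b - a).
Proof.
set h := fun m => x * (Eser a b m - fps_one m).
have h0 : h 0%N = 0.
  by rewrite /h /Eser /gfall big_ord0 /fps_one /= fact0 divr1 subrr mulr0.
have Dh : fD h = (fun m => x * b * Eser a (b - a) m).
  apply: functional_extensionality => m.
  rewrite /fD /h /fps_one /= subr0 mulrCA.
  by rewrite -[m.+1%:R * _]/(fD (Eser a b) m) D_E mulrA.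
set G := fps_geom h.
have Tdef : forall k c, T 1 x k a b c = k`!%:R * fps_mul (Eser a c) G k.
  by move=> k c; rewrite /T /Tgf /= mul_one.
rewrite !Tdef factS natrM -mulrA mulrCA.
under eq_bigr => k _ do rewrite !Tdef.
transitivity (n`!%:R * fD (fps_mul (Eser a g) G) n); first by [].
rewrite D_mul.
have -> : fD (Eser a g) = (fun m => g * Eser a (g - a) m).
  by apply: functional_extensionality => m; rewrite D_E.
have -> : fD G = fps_mul G (fps_mul (fD h) G).
  by apply: functional_extensionality => m; rewrite geomD.
rewrite Dh (mulZlF (x * b) (Eser a (b - a)) G) (mulZrF (x * b) G (fps_mul (Eser a (b - a)) G)) mulZr -mulA [fps_mul _ (fps_mul (Eser a (b - a)) G)]mulC.
set P := fps_mul (Eser a g) G; set Q := fps_mul (Eser a (b - a)) G.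
rewrite mulrDr; congr (_ + _); first by rewrite (mulZl g (Eser a (g - a)) G) mulrCA.
rewrite [fps_mul Q P n]/fps_mul.
rewrite mulrCA; congr (_ * _); rewrite mulr_sumr; apply: eq_bigr => k _.
have hk : (k <= n)%N by rewrite -ltnS.
rewrite -(bin_fact hk) !natrM; ring.
Qed.

Theorem theorem3 (a b g x : nat) (n : nat) :
  (a, b, g, x) != (0, 0, 0, 0)%N ->
  T 1 x%:R n.+1 a%:R b%:R g%:R =
    g%:R * T 1 x%:R n a%:R b%:R (g%:R - a%:R)
    + x%:R * b%:R * \sum_(k < n.+1)
        'C(n, k)%:R * T 1 x%:R (n - k)%N a%:R b%:R g%:R
                    * T 1 x%:R k a%:R b%:R (b%:R - a%:R).
Proof.
move=> _; exact: main.
Qed.
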